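(* Let $N \ge 1$ and let $W_N$ be the set of binary words of length $N$. Define $\varphi_4 : W_N \to W_N$ by $\varphi_4(u) = v\, 01100\, v'$ if $u = v\, 01010\, v'$ where $v, v'$ are (possibly empty) words such that the word $v010$ does not contain $01010$ as a contiguous subword; and $\varphi_4(u) = u$ otherwise. Then $|P(\varphi_4(u))| \leq |P(u)|$ for every $u \in W_N$.
   Context: Juxtaposition denotes concatenation. For a binary word $w = w_1 \cdots w_\ell$ of length $\ell$, $P(w)$ is the set of indices $i \geq 2$ such that at least one of the following holds: (i) $\ell \geq i$ and $w_{i-1} w_i = 00$; (ii) $\ell \geq i+2$ and $w_{i-1} w_i w_{i+1} w_{i+2} = 0100$; (iii) $\ell \geq i+3$ and $w_{i-1} \cdots w_{i+3} = 01010$. *)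

(* Defs.v *)
From mathcomp Require Import all_boot.
Set Implicit Arguments. Unset Strict Implicit. Unset Printing Implicit Defensive.

(* Binary words: seq bool, with false = 0 and true = 1. *)
Definition word := seq bool.

(* 1-indexed letter w_j of w (j >= 1). *)
Definition letter (w : word) (j : nat) : bool := nth false w j.-1.

Definition inP (w : word) (i : nat) : bool :=
  let l := size w in
  (2 <= i) &&
  [|| (i <= l) && (letter w i.-1 == false) && (letter w i == false),
      (i + 2 <= l) && (letter w i.-1 == false) && (letter w i == true)
        && (letter w i.+1 == false) && (letter w i.+2 == false)
    | (i + 3 <= l) && (letter w i.-1 == false) && (letter w i == true)
        && (letter w i.+1 == false) && (letter w i.+2 == true)
        && (letter w i.+3 == false)].

(* P(w) as a finite list of indices: every index in P(w) lies in [2, size w]. *)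
Definition Pset (w : word) : seq nat := [seq i <- iota 0 (size w).+1 | inP w i].

Definition cardP (w : word) : nat := size (Pset w).

Definition w01010 : word := [:: false; true; false; true; false].
Definition w01100 : word := [:: false; true; true; false; false].
Definition w010 : word := [:: false; true; false].

Definition phi4 (u : word) : word :=
  if [exists k : 'I_(size u).+1,
        (u == take k u ++ w01010 ++ drop (k + 5) u)
        && ~~ infix w01010 (take k u ++ w010)]
  then
    let k := [arg min_(k < ord0 | (u == take k u ++ w01010 ++ drop (k + 5) u)
                                 && ~~ infix w01010 (take k u ++ w010)) (k : nat)]
               : 'I_(size u).+1 in
    take k u ++ w01100 ++ drop (k + 5) u
  else u.

(* Main.v *)
Require Import Defs.
From mathcomp Require Import all_boot zify.

Lemma nth_mid (p x y q : seq bool) n :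
  size x = size y -> (n < size p) || (size p + size x <= n) ->
  nth false (p ++ x ++ q) n = nth false (p ++ y ++ q) n.
Proof.
move=> Hs Hn; rewrite !nth_cat; case: ifP => // Hp.
rewrite -Hs; case: ifP => Hx.
  by move: Hn Hx; rewrite Hp /=; lia.
by rewrite Hs.
Qed.

Lemma inP_eq (w1 w2 : word) i :
  size w1 = size w2 ->
  (forall j, i.-1 <= j <= i.+3 -> letter w1 j = letter w2 j) ->
  inP w1 i = inP w2 i.
Proof.
move=> Hs H; rewrite /inP Hs !H //.
all: case: i {H} => [|i] //=; rewrite ?leqnn ?leqnSn //.
all: lia.

Qed.

Definition inP0 (w : word) (i : nat) : bool :=
  let l := size w in
  [|| (i <= l) && (letter w i.-1 == false) && (letter w i == false),
      (i + 2 <= l) && (letter w i.-1 == false) && (letter w i == true)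
        && (letter w i.+1 == false) && (letter w i.+2 == false)
    | (i + 3 <= l) && (letter w i.-1 == false) && (letter w i == true)
        && (letter w i.+1 == false) && (letter w i.+2 == true)
        && (letter w i.+3 == false)].

Lemma letter_shift (p t : word) j : 1 <= j -> letter (p ++ t) (size p + j) = letter t j.
Proof.
case: j => // j _; rewrite /letter addnS /= nth_cat ltnNge leq_addr /=.
by rewrite addKn.
Qed.

Lemma inP_shift (p t : word) j : 2 <= j -> inP (p ++ t) (size p + j) = inP0 t j.
Proof.
case: j => // [][]// j _.
have L k : 1 <= k -> letter (p ++ t) (size p + k) = letter t k by apply: letter_shift.
have E1 : (size p + j.+2).-1 = size p + j.+1 by lia.
have E2 : (size p + j.+2).+1 = size p + j.+3 by lia.
have E3 : (size p + j.+2).+2 = size p + j.+4 by lia.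
have E4 : (size p + j.+2).+3 = size p + j.+4.+1 by lia.
rewrite /inP /inP0 E4 E3 E2 E1 !L // size_cat.
have -> : 2 <= size p + j.+2 by lia.
have -> : (size p + j.+2 <= size p + size t) = (j.+2 <= size t) by rewrite -?addnA leq_add2l.
have -> : (size p + j.+2 + 2 <= size p + size t) = (j.+2 + 2 <= size t) by rewrite -?addnA leq_add2l.
by rewrite -?addnA leq_add2l.
Qed.

Lemma shift_count (p t : word) :
  count (preim (addn (size p)) (inP (p ++ t))) (iota 2 6) = count (inP0 t) (iota 2 6).
Proof.
apply: eq_in_count => x; rewrite mem_iota => /andP[h _] /=; exact: inP_shift.
Qed.

Ltac fin := rewrite /= /inP0 /inP /letter /=;
  repeat match goal with b : bool |- _ => case: b end; by [].

Lemma mid (v v' : word) :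
  count (inP (v ++ w01100 ++ v')) (iota (size v) 6)
  <= count (inP (v ++ w01010 ++ v')) (iota (size v) 6).
Proof.
case/lastP: v => [|v1 b]; last case/lastP: v1 => [|v0 a].
- by case: v' => [|c [|d [|e [|f r]]]]; fin.
- by case: v' => [|c [|d [|e [|f r]]]]; fin.
rewrite -!cats1 !size_cat -addnA iotaDl !count_map -!catA.
rewrite !cat1s !shift_count.
by case: v' => [|c [|d [|e [|f r]]]]; fin.
Qed.

Lemma key (v v' : word) :
  cardP (v ++ w01100 ++ v') <= cardP (v ++ w01010 ++ v').
Proof.
have cP w : cardP w = count (inP w) (iota 0 (size w).+1) by rewrite /cardP size_filter.
set w1 := v ++ w01010 ++ v'; set w2 := v ++ w01100 ++ v'.
have E1 : w1 = (v ++ [:: false; true]) ++ [:: false; true] ++ (false :: v') by rewrite -catA.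
have E2 : w2 = (v ++ [:: false; true]) ++ [:: true; false] ++ (false :: v') by rewrite -catA.
have S1 : size w1 = size v + (6 + size v').-1 by rewrite /w1 !size_cat.
have S2 : size w2 = size v + (6 + size v').-1 by rewrite /w2 !size_cat.
have Lt j : j.-1 != size v + 2 -> j.-1 != size v + 3 -> letter w2 j = letter w1 j.
  move=> h1 h2; rewrite /letter E1 E2; apply: nth_mid => //.
  rewrite size_cat /=; lia.
have Far i : (i + 3 <= size v + 2) || (size v + 6 <= i) -> inP w2 i = inP w1 i.
  move=> h; apply: inP_eq; first by rewrite S1 S2.
  move=> j hj; apply: Lt; lia.
rewrite !cP.
have -> : (size w1).+1 = size v + (6 + size v') by rewrite S1; lia.
have -> : (size w2).+1 = size v + (6 + size v') by rewrite S2; lia.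
rewrite iotaD add0n iotaD !count_cat.
rewrite (@eq_in_count _ (inP w2) (inP w1) (iota 0 (size v))); last first.
  move=> i; rewrite mem_iota => /andP[_ h]; apply: Far; lia.
rewrite (@eq_in_count _ (inP w2) (inP w1) (iota (size v + 6) (size v'))); last first.
  move=> i; rewrite mem_iota => /andP[h _]; apply: Far; lia.
by rewrite leq_add2l leq_add2r; apply: mid.
Qed.

Theorem lemma4p4 (N : nat) (u : seq bool) :
  1 <= N -> size u = N -> cardP (phi4 u) <= cardP u.
Proof.
move=> _ _; rewrite /phi4; case: ifP => // /existsP[k0 Hk0].
set P := (fun k : 'I_(size u).+1 => _).
have [j Pj Hj] : exists2 j, P j & forall k, P k -> (j : nat) <= k.
  by case: (@arg_minnP _ k0 P (fun k => k : nat) Hk0) => i Pi Hi; exists i.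
set k := [arg min_(k < ord0 | P k) _].
have Pk : P k.
  rewrite /k /arg_min /extremum; case: pickP => [x /andP[] //| none].
  have := none j; rewrite /= Pj /=; move/negbT/forallPn => [y].
  by rewrite negb_imply => /andP[Py]; rewrite Hj.
case/andP: Pk => /eqP E _.
by rewrite [X in _ <= cardP X]E; apply: key.
Qed.
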